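(* Let $(G,\sigma)$ be a connection graph and $i\neq j\in V$. Writing $\mathcal{C}^\sigma(i,j)=\begin{bmatrix}\mathcal{C}^\sigma_{ii}&\mathcal{C}^\sigma_{ij}\\ \mathcal{C}^\sigma_{ji}&\mathcal{C}^\sigma_{jj}\end{bmatrix}$, the block $\mathcal{C}^\sigma_{ii}$ is invertible and $$\Omega^0_{ij}=-(\mathcal{C}^\sigma_{ii})^{-1}\mathcal{C}^\sigma_{ij}.$$
   Context: A connection graph $(G,\sigma)$: finite connected weighted graph $G=(V,E,W)$, $V=\{1,\dots,n\}$, $w_{xy}>0$ iff $\{x,y\}\in E$, $\deg(x)=\sum_y w_{xy}$, and $\sigma$ mapping oriented edges to $\mathsf{O}(d)$ with $\sigma_{yx}=\sigma_{xy}^{\mathrm T}$. Connection Laplacian $\mathcal{L}$: $nd\times nd$ block matrix with blocks $\deg(x)I_d$ on the diagonal, $-w_{xy}\sigma_{xy}$ for $x\sim y$, $0$ otherwise. For $M=\begin{bmatrix}A&B\\C&D\end{bmatrix}$, $M/D=A-BD^\dagger C$. The conductance matrix $\mathcal{C}^\sigma(i,j)=\mathcal{L}/\mathcal{L}_{\{i,j\}^c,\{i,j\}^c}\in\mathbb{R}^{2d\times 2d}$, blocks ordered $i$ then $j$. $(X_t)$: simple random walk with transition probabilities $w_{xy}/\deg(x)$; $T^0_j=\inf\{t\ge0:X_t=j\}$; $\Omega^0_{ij}=\mathbb{E}\big[\prod_{\ell=1}^{T^0_j}\sigma_{X_{\ell-1}X_\ell}\mid X_0=i\big]$ (ordered product).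 *)

(* Defs.v *)
From HB Require Import structures.
From mathcomp Require Import all_boot all_order all_algebra.
From mathcomp Require Import all_classical all_reals all_analysis.
Set Implicit Arguments. Unset Strict Implicit. Unset Printing Implicit Defensive.
Import Order.TTheory GRing.Theory Num.Theory.
Import numFieldNormedType.Exports.
Local Open Scope ring_scope.

Section ConnectionGraph.
Variables (R : realType) (n d : nat).
Variable w : 'I_n -> 'I_n -> R.            (* edge weights, w x y > 0 iff x ~ y *)
Variable sigma : 'I_n -> 'I_n -> 'M[R]_d.

Definition is_weighted_graph : Prop :=
  [/\ forall x y, 0 <= w x y, forall x y, w x y = w y x & forall x, w x x = 0].
Definition graph_connected : Prop :=
  forall x y : 'I_n, connect [rel u v | 0 < w u v] x y.
Definition is_connection : Prop :=
  forall x y, 0 < w x y ->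
    sigma y x = (sigma x y)^T /\ (sigma x y)^T *m sigma x y = 1%:M.

Definition deg (x : 'I_n) : R := \sum_(y < n) w x y.

(* Connection Laplacian, indexed by pairs (vertex, coordinate):
   block (x,x) = deg x I_d, block (x,y) = - w x y sigma x y for x != y
   (zero when x,y are not adjacent since then w x y = 0). *)
Definition conn_lap (u v : 'I_n * 'I_d) : R :=
  if u.1 == v.1 then deg u.1 * (u.2 == v.2)%:R
  else - (w u.1 v.1 * sigma u.1 v.1 u.2 v.2).

(* Moore--Penrose pseudoinverse, characterised by the Penrose equations *)
Definition penrose m k (A : 'M[R]_(m, k)) (X : 'M[R]_(k, m)) : Prop :=
  [/\ A *m X *m A = A, X *m A *m X = X,
      (A *m X)^T = A *m X & (X *m A)^T = X *m A].
Definition mpinv m k (A : 'M[R]_(m, k)) : 'M[R]_(k, m) :=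
  xget 0 (penrose A).

Section Pair.
Variables (i j : 'I_n).

(* boundary indices: first the d coordinates at i, then those at j *)
Definition bnd (k : 'I_(d + d)) : 'I_n * 'I_d :=
  match fintype.split k with inl a => (i, a) | inr a => (j, a) end.
Definition interior : {set 'I_n * 'I_d} := [set u | (u.1 != i) && (u.1 != j)].
Definition intv (k : 'I_#|interior|) : 'I_n * 'I_d := enum_val k.

Definition LA : 'M[R]_(d + d) := \matrix_(k, l) conn_lap (bnd k) (bnd l).
Definition LB : 'M[R]_(d + d, #|interior|) := \matrix_(k, l) conn_lap (bnd k) (intv l).
Definition LC : 'M[R]_(#|interior|, d + d) := \matrix_(k, l) conn_lap (intv k) (bnd l).
Definition LD : 'M[R]_#|interior| := \matrix_(k, l) conn_lap (intv k) (intv l).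

(* conductance matrix C^sigma(i,j) = L / L_{{i,j}^c,{i,j}^c} *)
Definition conductance : 'M[R]_(d + d) := LA - LB *m mpinv LD *m LC.
Definition C_ii : 'M[R]_d := ulsubmx conductance.
Definition C_ij : 'M[R]_d := ursubmx conductance.

(* Random-walk paths X_0 = i, ..., X_t = j with X_l != j for l < t,
   i.e. exactly the trajectories with T^0_j = t. *)
Definition hit_paths (t : nat) : {set {ffun 'I_t.+1 -> 'I_n}} :=
  [set p : {ffun 'I_t.+1 -> 'I_n} | [&& p ord0 == i, p ord_max == j &
     [forall l : 'I_t.+1, (l < t)%N ==> (p l != j)]]].

Definition path_prob t (p : {ffun 'I_t.+1 -> 'I_n}) : R :=
  \prod_(l < t) (w (p (inord l)) (p (inord l.+1)) / deg (p (inord l))).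

Definition path_hol t (p : {ffun 'I_t.+1 -> 'I_n}) : 'M[R]_d :=
  foldr (fun M acc => M *m acc) 1%:M
    [seq sigma (p (inord l)) (p (inord l.+1)) | l <- iota 0 t].

(* E[ prod sigma ; T^0_j = t | X_0 = i ] *)
Definition Omega_term (t : nat) : 'M[R]_d :=
  \sum_(p in hit_paths t) path_prob p *: path_hol p.

Definition Omega0 : 'M[R]_d :=
  \matrix_(a, b) limn (series (fun t => Omega_term t a b) : R^nat).

End Pair.
End ConnectionGraph.

(* Main.v *)
Require Import Defs.
From HB Require Import structures.
From mathcomp Require Import all_boot all_order all_algebra.
From mathcomp Require Import all_classical all_reals all_analysis.
From mathcomp Require Import ring.
Import Order.TTheory GRing.Theory Num.Theory.
Import numFieldNormedType.Exports.
Set Implicit Arguments. Unset Strict Implicit. Unset Printing Implicit Defensive.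
Local Open Scope ring_scope.
Section Comb.
Variables (R : realType) (n d : nat).
Variables (w : 'I_n -> 'I_n -> R) (sigma : 'I_n -> 'I_n -> 'M[R]_d).

Definition fcons t (x : 'I_n) (q : {ffun 'I_t.+1 -> 'I_n}) : {ffun 'I_t.+2 -> 'I_n} :=
  [ffun k => if unlift ord0 k is Some l then q l else x].
Definition ftail t (p : {ffun 'I_t.+2 -> 'I_n}) : {ffun 'I_t.+1 -> 'I_n} :=
  [ffun l => p (lift ord0 l)].

Lemma fcons0 t x (q : {ffun 'I_t.+1 -> 'I_n}) : fcons x q ord0 = x.
Proof. by rewrite ffunE unlift_none. Qed.

Lemma fcons_lift t x (q : {ffun 'I_t.+1 -> 'I_n}) l : fcons x q (lift ord0 l) = q l.
Proof. by rewrite ffunE liftK. Qed.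

Lemma fconsS t x (q : {ffun 'I_t.+1 -> 'I_n}) k : (k < t.+1)%N ->
  fcons x q (inord k.+1) = q (inord k).
Proof.
move=> hk; have -> : (inord k.+1 : 'I_t.+2) = lift ord0 (inord k : 'I_t.+1).
  by apply: val_inj; rewrite /= /bump /= !inordK.
by rewrite fcons_lift.
Qed.

Lemma fcons_max t x (q : {ffun 'I_t.+1 -> 'I_n}) : fcons x q ord_max = q ord_max.
Proof.
have -> : (ord_max : 'I_t.+2) = lift ord0 (ord_max : 'I_t.+1).
  by apply: val_inj.
by rewrite fcons_lift.
Qed.

Lemma fcons_tail t (p : {ffun 'I_t.+2 -> 'I_n}) : fcons (p ord0) (ftail p) = p.
Proof.
apply/ffunP=> k; case: (unliftP ord0 k) => [l ->|->].
  by rewrite fcons_lift ffunE.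
by rewrite fcons0.
Qed.

Lemma ftail_cons t x (q : {ffun 'I_t.+1 -> 'I_n}) : ftail (fcons x q) = q.
Proof. by apply/ffunP=> l; rewrite ffunE fcons_lift. Qed.

Lemma hit_cons (j : 'I_n) t x (q : {ffun 'I_t.+1 -> 'I_n}) :
  (fcons x q \in hit_paths x j t.+1) = (x != j) && (q \in hit_paths (q ord0) j t).
Proof.
rewrite !inE fcons0 fcons_max !eqxx /=.
case: (q ord_max == j) => /=; last by rewrite andbF.
apply/idP/idP.
  move/forallP=> H; apply/andP; split.
    by have := H ord0; rewrite fcons0.
  apply/forallP=> l; apply/implyP=> hl.
  by have := H (lift ord0 l); rewrite lift0 fcons_lift ltnS hl.
case/andP=> hx /forallP H; apply/forallP=> k; apply/implyP=> hk.
case: (unliftP ord0 k) hk => [l ->|->].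
  by rewrite lift0 fcons_lift ltnS; apply: (implyP (H l)).
by rewrite fcons0.
Qed.

Lemma hit_sumS (V : zmodType) (j : 'I_n) x t (f : {ffun 'I_t.+2 -> 'I_n} -> V) :
  \sum_(p in hit_paths x j t.+1) f p =
  if x == j then 0 else \sum_y \sum_(q in hit_paths y j t) f (fcons x q).
Proof.
rewrite (reindex_onto (fun yq : 'I_n * {ffun 'I_t.+1 -> 'I_n} => fcons x yq.2)
                      (fun p => (p (lift ord0 ord0), ftail p))); last first.
  move=> p; rewrite inE => /andP [/eqP <- _]; exact: fcons_tail.
case: eqP => [->|/eqP hx].
  by rewrite big_pred0 // => yq; rewrite hit_cons eqxx.
rewrite pair_big_dep; apply: eq_bigl => [[y q]] /=.
rewrite hit_cons hx fcons_lift ftail_cons /=.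
rewrite xpair_eqE eqxx andbT.
by rewrite !inE eqxx /=; case: (q ord0 == y); rewrite ?andbT ?andbF.
Qed.

Lemma hit_sum0 (V : zmodType) (j x : 'I_n) (f : {ffun 'I_1 -> 'I_n} -> V) :
  \sum_(p in hit_paths x j 0) f p = if x == j then f [ffun => x] else 0.
Proof.
case: eqP => [<-|/eqP hx].
  have -> : hit_paths x x 0 = [set [ffun => x]].
    apply/setP=> p; rewrite !inE.
    apply/idP/eqP => [/and3P [/eqP h _ _]|->].
      by apply/ffunP=> k; rewrite ffunE (ord1 k) h.
    by rewrite !ffunE !eqxx /=; apply/forallP.
  by rewrite big_set1.
rewrite big_pred0 // => p; rewrite inE; apply/negP => /and3P [/eqP h1 /eqP h2 _].
move/eqP: hx; apply; rewrite -h1 -h2; congr (p _); exact: val_inj.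
Qed.

Lemma prob_cons t x (q : {ffun 'I_t.+1 -> 'I_n}) :
  path_prob w (fcons x q) = w x (q ord0) / deg w x * path_prob w q.
Proof.
rewrite /path_prob big_ord_recl; congr (_ * _).
  have -> : (inord 0 : 'I_t.+2) = ord0 by apply: val_inj; rewrite /= inordK.
  rewrite fcons0 fconsS //; congr (w _ (q _) / _).
  by apply: val_inj; rewrite /= inordK.
apply: eq_bigr => i _; rewrite lift0 !fconsS //.
  by rewrite ltnS ltn_ord.
by rewrite ltnS ltnW.
Qed.

Lemma hol_cons t x (q : {ffun 'I_t.+1 -> 'I_n}) :
  path_hol sigma (fcons x q) = sigma x (q ord0) *m path_hol sigma q.
Proof.
rewrite /path_hol /=.
have -> : (inord 0 : 'I_t.+2) = ord0 by apply: val_inj; rewrite /= inordK.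
rewrite fcons0 fconsS //.
have -> : (inord 0 : 'I_t.+1) = ord0 by apply: val_inj; rewrite /= inordK.
congr (_ *m _).
have -> : iota 1 t = map (addn 1) (iota 0 t) by rewrite -iotaDl.
rewrite -map_comp; congr foldr.
apply/eq_in_map => l; rewrite mem_iota add0n /= => hl.
have h1 : (l < t.+1)%N by rewrite ltnS ltnW.
have h2 : (l.+1 < t.+1)%N by rewrite ltnS.
by rewrite add1n (fconsS x q h2) (fconsS x q h1).
Qed.

Lemma Omega_term0 (j x : 'I_n) : Omega_term w sigma x j 0 = if x == j then 1%:M else 0.
Proof.
rewrite /Omega_term hit_sum0; case: eqP => // _.
by rewrite /path_prob /path_hol big_ord0 /= scale1r.
Qed.

Lemma Omega_termS (j x : 'I_n) t : Omega_term w sigma x j t.+1 =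
  if x == j then 0 else
  \sum_y (w x y / deg w x) *: (sigma x y *m Omega_term w sigma y j t).
Proof.
rewrite /Omega_term hit_sumS; case: eqP => // _.
apply: eq_bigr => y _.
rewrite mulmx_sumr scaler_sumr; apply: eq_bigr => q.
rewrite inE => /and3P [/eqP hq _ _].
by rewrite prob_cons hol_cons hq -scalemxAr scalerA.
Qed.

Definition Pp (j x : 'I_n) t : R := \sum_(p in hit_paths x j t) path_prob w p.

Lemma Pp0 (j x : 'I_n) : Pp j x 0 = (x == j)%:R.
Proof.
by rewrite /Pp hit_sum0; case: eqP => // _; rewrite /path_prob big_ord0.
Qed.

Lemma PpS (j x : 'I_n) t : Pp j x t.+1 =
  if x == j then 0 else \sum_y (w x y / deg w x) * Pp j y t.
Proof.
rewrite /Pp hit_sumS; case: eqP => // _.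
apply: eq_bigr => y _; rewrite mulr_sumr; apply: eq_bigr => q.
rewrite inE => /and3P [/eqP hq _ _].
by rewrite prob_cons hq.
Qed.
End Comb.

Section Bounds.
Variables (R : realType) (n d : nat).
Variables (w : 'I_n -> 'I_n -> R) (sigma : 'I_n -> 'I_n -> 'M[R]_d).
Hypothesis Hw : is_weighted_graph w.
Hypothesis Hsig : is_connection w sigma.

Lemma w_ge0 x y : 0 <= w x y.
Proof. by case: Hw. Qed.

Lemma deg_ge0 x : 0 <= deg w x.
Proof. by apply: sumr_ge0 => y _; apply: w_ge0. Qed.

Lemma prob_ge0 t (p : {ffun 'I_t.+1 -> 'I_n}) : 0 <= path_prob w p.
Proof.
by apply: prodr_ge0 => l _; apply: divr_ge0; [apply: w_ge0|apply: deg_ge0].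
Qed.

Lemma Pp_ge0 j x t : 0 <= Pp w j x t.
Proof. by apply: sumr_ge0 => p _; apply: prob_ge0. Qed.

Lemma sum_trans_le1 x : \sum_y w x y / deg w x <= 1.
Proof.
rewrite -mulr_suml -/(deg w x).
have [->|hd] := eqVneq (deg w x) 0; first by rewrite invr0 mulr0.
by rewrite divff.
Qed.

Lemma Pp_partial_le1 j T : forall x, \sum_(t < T) Pp w j x t <= 1.
Proof.
elim: T => [|T IH] x; first by rewrite big_ord0.
rewrite big_ord_recl Pp0.
under eq_bigr => t _ do rewrite lift0 PpS.
case: eqP => _.
  by rewrite big1 // addr0.
rewrite add0r exchange_big /=.
apply: le_trans (sum_trans_le1 x).
apply: ler_sum => y _; rewrite -mulr_sumr.
rewrite -[X in _ <= X]mulr1; apply: ler_wpM2l; last exact: IH.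
by apply: divr_ge0; [apply: w_ge0|apply: deg_ge0].
Qed.

Lemma foldr_orth (s : seq 'M[R]_d) :
  all (fun M => M^T *m M == 1%:M) s ->
  (foldr mulmx 1%:M s)^T *m foldr mulmx 1%:M s = 1%:M.
Proof.
elim: s => [|M s IH] /=; first by rewrite trmx1 mul1mx.
case/andP=> /eqP hM /IH hs.
by rewrite trmx_mul -mulmxA (mulmxA M^T) hM mul1mx.
Qed.

Lemma hol_orth t (p : {ffun 'I_t.+1 -> 'I_n}) : path_prob w p != 0 ->
  (path_hol sigma p)^T *m path_hol sigma p = 1%:M.
Proof.
move=> hp; rewrite /path_hol.
have -> : (fun M acc => M *m acc) = (@mulmx R d d d) by [].
apply: foldr_orth; rewrite all_map; apply/allP => l; rewrite mem_iota add0n /= => hl.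
have hw : w (p (inord l)) (p (inord l.+1)) != 0.
  apply: contra hp => /eqP h0; apply/prodf_eq0.
  by exists (Ordinal hl) => //=; rewrite h0 mul0r.
have hpos : 0 < w (p (inord l)) (p (inord l.+1)) by rewrite lt_def hw w_ge0.
by have [_ ->] := Hsig hpos.
Qed.

Lemma orth_entry (M : 'M[R]_d) a b : M^T *m M = 1%:M -> `|M a b| <= 1.
Proof.
move=> hM.
have : \sum_c M c b ^+ 2 = (M^T *m M) b b.
  by rewrite mxE; apply: eq_bigr => c _; rewrite mxE expr2.
rewrite hM mxE eqxx /= ?mulr1n (bigD1 a) //= => h.
have h2 : M a b ^+ 2 <= 1.
  rewrite -h lerDl; apply: sumr_ge0 => c _; exact: sqr_ge0.
by rewrite -(expr_le1 (n:=2)) // real_normK // num_real.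
Qed.

Lemma Omega_entry_le j x t a b : `|Omega_term w sigma x j t a b| <= Pp w j x t.
Proof.
rewrite /Omega_term /Pp summxE.
apply: le_trans (ler_norm_sum _ _ _) _.
apply: ler_sum => p _; rewrite mxE normrM (ger0_norm (prob_ge0 p)).
have [->|hp] := eqVneq (path_prob w p) 0; first by rewrite mul0r.
by rewrite -[X in _ <= X]mulr1 ler_wpM2l ?prob_ge0 // orth_entry // hol_orth.
Qed.

Lemma Pp_series_cvg j x : cvgn (series (Pp w j x)).
Proof.
apply: nondecreasing_is_cvgn.
  by apply: (@nondecreasing_series _ _ predT 0) => k _ _; apply: Pp_ge0.
exists 1 => _ [T _ <-].
by rewrite /series /= big_mkord; apply: Pp_partial_le1.
Qed.

Lemma Omega_series_cvg j x a b :
  cvgn (series (fun t => Omega_term w sigma x j t a b)).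
Proof.
apply: normed_cvg.
apply: (@series_le_cvg _ _ (Pp w j x)).
- by move=> k; exact: normr_ge0.
- by move=> k; apply: Pp_ge0.
- by move=> k; apply: Omega_entry_le.
exact: Pp_series_cvg.
Qed.
End Bounds.

Local Open Scope classical_set_scope.
Local Open Scope ring_scope.
Section Limits.
Variables (R : realType) (n d : nat).
Variables (w : 'I_n -> 'I_n -> R) (sigma : 'I_n -> 'I_n -> 'M[R]_d).
Hypothesis Hw : is_weighted_graph w.
Hypothesis Hsig : is_connection w sigma.

Lemma cvg_big_seq (I : eqType) (r : seq I) (f : I -> nat -> R) (l : I -> R) :
  (forall i, f i @ \oo --> l i) ->
  (fun T => \sum_(i <- r) f i T) @ \oo --> \sum_(i <- r) l i.
Proof.
move=> hf; elim: r => [|i r IH].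
  have -> : (fun T => \sum_(i <- [::]) f i T) = fun=> 0.
    by apply: funext => T; rewrite big_nil.
  by rewrite big_nil; apply: cvg_cst.
have -> : (fun T => \sum_(k <- i :: r) f k T) =
          (f i + (fun T => \sum_(k <- r) f k T)).
  by apply: funext => T; rewrite big_cons.
by rewrite big_cons; apply: cvgD.
Qed.

Lemma cvg_big (I : finType) (f : I -> nat -> R) (l : I -> R) :
  (forall i, f i @ \oo --> l i) ->
  (fun T => \sum_i f i T) @ \oo --> \sum_i l i.
Proof. by move=> hf; apply: cvg_big_seq. Qed.

Definition Om (j x : 'I_n) : 'M[R]_d :=
  \matrix_(a, b) limn (series (fun t => Omega_term w sigma x j t a b)).

Definition sser (j x : 'I_n) a b T := series (fun t => Omega_term w sigma x j t a b) T.

Lemma sser_cvg j x a b : sser j x a b @ \oo --> Om j x a b.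
Proof. by rewrite mxE; apply: (Omega_series_cvg Hw Hsig). Qed.

Lemma sserS j x a b T : sser j x a b T.+1 =
  if x == j then (a == b)%:R else
  \sum_y (w x y / deg w x) * \sum_c sigma x y a c * sser j y c b T.
Proof.
rewrite /sser /series /= !big_mkord big_ord_recl Omega_term0.
rewrite (eq_bigr (fun t : 'I_T => Omega_term w sigma x j t.+1 a b)); last first.
  by move=> t _.
under eq_bigr => t _ do rewrite Omega_termS.
case: eqP => _.
  by rewrite big1 ?addr0 ?mxE // => t _; rewrite mxE.
have z0 : (0 : 'M[R]_d) a b = 0 by rewrite mxE.
rewrite z0 add0r.
under eq_bigr => t _ do rewrite summxE.
rewrite exchange_big /=; apply: eq_bigr => y _.
under eq_bigr => t _ do rewrite !mxE.
rewrite -mulr_sumr; congr (_ * _).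
under [RHS]eq_bigr => c _ do rewrite big_mkord mulr_sumr.
by rewrite [RHS]exchange_big.
Qed.

Lemma Om_eq j x a b : Om j x a b =
  if x == j then (a == b)%:R else
  \sum_y (w x y / deg w x) * \sum_c sigma x y a c * Om j y c b.
Proof.
have h1 := @sser_cvg j x a b.
rewrite -cvg_shiftS in h1.
have e : [sequence sser j x a b n.+1]_n = fun T =>
  if x == j then (a == b)%:R else
  \sum_y (w x y / deg w x) * \sum_c sigma x y a c * sser j y c b T.
  by apply: funext => T; rewrite /= sserS.
rewrite e in h1.
have h2 : (fun T =>
  if x == j then (a == b)%:R else
  \sum_y (w x y / deg w x) * \sum_c sigma x y a c * sser j y c b T) @ \oo -->
  (if x == j then (a == b)%:R else
  \sum_y (w x y / deg w x) * \sum_c sigma x y a c * Om j y c b).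
  case: eqP => _; first exact: cvg_cst.
  apply: cvg_big => y; apply: cvgMl_tmp; apply: cvg_big => c; apply: cvgMl_tmp.
  exact: sser_cvg.
apply: (@norm_cvg_unique R R^o _ _ _ _ h1 h2).
Qed.
End Limits.

Section Harm.
Variables (R : realType) (n d : nat).
Variables (w : 'I_n -> 'I_n -> R) (sigma : 'I_n -> 'I_n -> 'M[R]_d).
Hypothesis Hw : is_weighted_graph w.
Hypothesis Hsig : is_connection w sigma.

Lemma sum_pair (G : 'I_n * 'I_d -> R) : \sum_v G v = \sum_y \sum_c G (y, c).
Proof. by rewrite pair_big; apply: eq_bigr => [[y c]]. Qed.

Lemma conn_lapE x a y c : conn_lap w sigma (x, a) (y, c) =
  (y == x)%:R * (deg w x * (a == c)%:R) - w x y * sigma x y a c.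
Proof.
rewrite /conn_lap /=; case: (eqVneq x y) => [<-|ne].
  by case: Hw => _ _ ->; rewrite mul0r subr0 mul1r.
by rewrite mul0r sub0r.
Qed.

Lemma lap_apply (z : 'I_n * 'I_d -> R) x a :
  \sum_v conn_lap w sigma (x, a) v * z v =
  deg w x * z (x, a) - \sum_y w x y * \sum_c sigma x y a c * z (y, c).
Proof.
rewrite sum_pair.
under eq_bigr => y _ do under eq_bigr => c _ do rewrite conn_lapE mulrBl.
under eq_bigr => y _ do rewrite sumrB.
rewrite sumrB; congr (_ - _).
  rewrite (bigD1 x) //= [X in _ + X]big1 ?addr0; last first.
    move=> y hy; rewrite (negbTE hy); apply: big1 => c _; by rewrite !mul0r.
  rewrite (bigD1 a) //= [X in _ + X]big1 ?addr0; last first.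
    move=> c hc; rewrite eq_sym (negbTE hc); by rewrite mulr0 mulr0 mul0r.
  by rewrite !eqxx mul1r mulr1.
apply: eq_bigr => y _; rewrite mulr_sumr; apply: eq_bigr => c _.
by rewrite mulrA.
Qed.

Lemma harmonic j x b : x != j -> forall a,
  \sum_v conn_lap w sigma (x, a) v * Om w sigma j v.1 v.2 b = 0.
Proof.
move=> hx a; rewrite lap_apply /= (Om_eq Hw Hsig) (negbTE hx).
rewrite mulr_sumr; apply/eqP; rewrite subr_eq0; apply/eqP; apply: eq_bigr => y _.
rewrite mulrA; congr (_ * _).
have [h0|hd] := eqVneq (deg w x) 0.
  have : w x y = 0.
    move/eqP: h0; rewrite /deg psumr_eq0 => [/allP H|y' _]; last by case: Hw.
    by apply/eqP; apply: H; rewrite mem_index_enum.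
  by move=> ->; rewrite mul0r mulr0.
by rewrite mulrCA divff // mulr1.
Qed.

Lemma Om_jj j : Om w sigma j j = 1%:M.
Proof.
by apply/matrixP => a b; rewrite (Om_eq Hw Hsig) eqxx !mxE.
Qed.
End Harm.

Section KeyLemma.
Variables (R : realType) (n d : nat).
Variables (w : 'I_n -> 'I_n -> R) (sigma : 'I_n -> 'I_n -> 'M[R]_d).
Hypothesis Hw : is_weighted_graph w.
Hypothesis Hconn : graph_connected w.
Hypothesis Hsig : is_connection w sigma.

Definition n2 (V : 'cV[R]_d) : R := (V^T *m V) 0 0.

Lemma n2E V : n2 V = \sum_a V a 0 ^+ 2.
Proof. by rewrite /n2 mxE; apply: eq_bigr => a _; rewrite mxE expr2. Qed.

Lemma n2_ge0 V : 0 <= n2 V.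
Proof. by rewrite n2E; apply: sumr_ge0 => a _; apply: sqr_ge0. Qed.

Lemma n2_eq0 V : n2 V = 0 -> V = 0.
Proof.
rewrite n2E => h; apply/matrixP => a b; rewrite (ord1 b) mxE.
have := psumr_eq0P (fun a _ => sqr_ge0 (V a 0)) h (i:=a) isT.
by move/eqP; rewrite sqrf_eq0 => /eqP.
Qed.

Lemma n2_orth (M : 'M[R]_d) V : M^T *m M = 1%:M -> n2 (M *m V) = n2 V.
Proof.
by move=> hM; rewrite /n2 trmx_mul mulmxA -(mulmxA V^T) hM mulmx1.
Qed.

Lemma n2B U S : n2 (U - S) = n2 U - 2 * (U^T *m S) 0 0 + n2 S.
Proof.
have hS : (S^T *m U) 0 0 = (U^T *m S) 0 0.
  by rewrite -[S^T *m U]trmxK trmx_mul trmxK mxE.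
have tB : (U - S)^T = U^T - S^T by apply/matrixP => a b; rewrite !mxE.
rewrite /n2 tB mulmxBr !mulmxBl.
rewrite -!/(n2 _).
have e1 : forall A B : 'M[R]_1, (A - B) 0 0 = A 0 0 - B 0 0 by move=> A B; rewrite !mxE.
rewrite !e1 hS /n2; ring.
Qed.

Definition Zc (z : 'I_n * 'I_d -> R) x : 'cV[R]_d := \col_a z (x, a).

Lemma cross z x y : ((Zc z x)^T *m (sigma x y *m Zc z y)) 0 0 =
  \sum_a z (x, a) * \sum_c sigma x y a c * z (y, c).
Proof.
rewrite mxE; apply: eq_bigr => a _; rewrite !mxE; congr (_ * _).
by apply: eq_bigr => c _; rewrite mxE.
Qed.

Lemma wsym x y : w x y = w y x.
Proof. by case: Hw. Qed.

Lemma term_eq z x y : w x y * n2 (Zc z x - sigma x y *m Zc z y) =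
  w x y * (n2 (Zc z x) - 2 * ((Zc z x)^T *m (sigma x y *m Zc z y)) 0 0 + n2 (Zc z y)).
Proof.
have [h0|hne] := eqVneq (w x y) 0; first by rewrite h0 !mul0r.
have hpos : 0 < w x y by rewrite lt_def hne; case: Hw => H _ _; apply: H.
have [_ ho] := Hsig hpos.
by rewrite n2B n2_orth.
Qed.

Lemma term_eq2 z x y : w x y * n2 (Zc z x - sigma x y *m Zc z y) =
  w x y * (n2 (Zc z x) - 2 * (\sum_a z (x, a) * \sum_c sigma x y a c * z (y, c)) + n2 (Zc z y)).
Proof. by rewrite term_eq cross. Qed.

Lemma quad_id z :
  \sum_x \sum_y w x y * n2 (Zc z x - sigma x y *m Zc z y) =
  2 * \sum_u z u * \sum_v conn_lap w sigma u v * z v.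
Proof.
under eq_bigr => x _ do under eq_bigr => y _ do rewrite term_eq2.
rewrite sum_pair.
under [in RHS]eq_bigr => x _ do under eq_bigr => a _ do rewrite (lap_apply sigma Hw).
have A : \sum_x \sum_y w x y * n2 (Zc z y) = \sum_x deg w x * n2 (Zc z x).
  rewrite exchange_big /=; apply: eq_bigr => y _; rewrite /deg mulr_suml.
  by apply: eq_bigr => x _; rewrite wsym.
have B : \sum_x \sum_y w x y * n2 (Zc z x) = \sum_x deg w x * n2 (Zc z x).
  by apply: eq_bigr => x _; rewrite /deg mulr_suml.
have C : \sum_x \sum_a z (x, a) * (deg w x * z (x, a) -
            \sum_y w x y * \sum_c sigma x y a c * z (y, c)) =
  \sum_x deg w x * n2 (Zc z x) -
  \sum_x \sum_y w x y * \sum_a z (x, a) * \sum_c sigma x y a c * z (y, c).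
  rewrite -sumrB; apply: eq_bigr => x _.
  rewrite n2E mulr_sumr.
  under eq_bigr => a _ do rewrite mulrBr.
  rewrite sumrB; congr (_ - _).
    by apply: eq_bigr => a _; rewrite !mxE; ring.
  under eq_bigr => a _ do rewrite mulr_sumr.
  rewrite exchange_big /=; apply: eq_bigr => y _; rewrite mulr_sumr.
  by apply: eq_bigr => a _; ring.
rewrite C.
under eq_bigr => x _ do under eq_bigr => y _ do rewrite !mulrDr mulrN.
under eq_bigr => x _ do rewrite big_split /= big_split /= sumrN.
rewrite big_split /= big_split /= sumrN A B.
under [X in _ - X + _]eq_bigr => x _ do under eq_bigr => y _ do rewrite mulrCA.
under [X in _ - X + _]eq_bigr => x _ do rewrite -mulr_sumr.
rewrite -mulr_sumr; ring.
Qed.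

Lemma key_lemma j (z : 'I_n * 'I_d -> R) :
  (forall a, z (j, a) = 0) ->
  \sum_u z u * \sum_v conn_lap w sigma u v * z v = 0 ->
  forall u, z u = 0.
Proof.
move=> zj hq.
have h := quad_id z; rewrite hq mulr0 in h.
have tge0 : forall x y, 0 <= w x y * n2 (Zc z x - sigma x y *m Zc z y).
  by move=> x y; apply: mulr_ge0; [case: Hw => H _ _; apply: H|apply: n2_ge0].
have h2 := psumr_eq0P (fun x _ => sumr_ge0 _ (fun y _ => tge0 x y)) h.
have edge : forall x y, 0 < w x y -> n2 (Zc z x) = n2 (Zc z y).
  move=> x y hxy.
  have := psumr_eq0P (fun y _ => tge0 x y) (h2 x isT) (i:=y) isT.
  move/eqP; rewrite mulf_eq0 (gt_eqF hxy) /= => /eqP/n2_eq0/eqP.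
  rewrite subr_eq0 => /eqP ->.
  by have [_ ho] := Hsig hxy; rewrite n2_orth.
have cl : fingraph.closed [rel u v | 0 < w u v] [pred x | n2 (Zc z x) == 0].
  by move=> x y /= hxy; rewrite !inE (edge x y hxy).
have nj : n2 (Zc z j) = 0.
  by rewrite n2E big1 // => a _; rewrite mxE zj expr2 mulr0.
move=> [x a].
have hx : n2 (Zc z x) == 0.
  have := closed_connect cl (Hconn x j); rewrite !inE nj eqxx => ->.
  done.
move/eqP/n2_eq0: hx => /matrixP /(_ a 0); rewrite !mxE.
done.
Qed.
End KeyLemma.

Section Schur.
Variables (R : realType) (n d : nat).
Variables (w : 'I_n -> 'I_n -> R) (sigma : 'I_n -> 'I_n -> 'M[R]_d).
Hypothesis Hw : is_weighted_graph w.
Hypothesis Hconn : graph_connected w.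
Hypothesis Hsig : is_connection w sigma.
Variables (i j : 'I_n).
Hypothesis Hij : i != j.

Local Notation L := (conn_lap w sigma).
Local Notation Int := (Defs.interior d i j).

Lemma bnd_l a : bnd i j (lshift d a) = (i, a).
Proof. by rewrite /bnd (unsplitK (inl _ a)). Qed.

Lemma bnd_r a : bnd i j (rshift d a) = (j, a).
Proof. by rewrite /bnd (unsplitK (inr _ a)). Qed.

Lemma intv_in (k : 'I_#|Int|) : intv k \in Int.
Proof. exact: enum_valP. Qed.

Lemma intv_i (k : 'I_#|Int|) : (intv k).1 != i.
Proof. by have := intv_in k; rewrite inE => /andP []. Qed.

Lemma intv_j (k : 'I_#|Int|) : (intv k).1 != j.
Proof. by have := intv_in k; rewrite inE => /andP []. Qed.

Lemma sum_split (F : 'I_n * 'I_d -> R) :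
  \sum_u F u = \sum_k F (bnd i j k) + \sum_(k < #|Int|) F (intv k).
Proof.
have e1 : \sum_(k < #|Int|) F (intv k) =
          \sum_(y | (y != i) && (y != j)) \sum_a F (y, a).
  rewrite /intv -(big_enum_val (A := mem Int)) big_mkcond sum_pair big_mkcond /=.
  rewrite [RHS]big_mkcond; apply: eq_bigr => y _.
  under eq_bigr => c _ do rewrite inE /=.
  case: ifP => // _.
  by apply: big1.
rewrite e1 big_split_ord /=.
rewrite [X in _ = X + _ + _](eq_bigr (fun a : 'I_d => F (i, a))); last by move=> a _; rewrite bnd_l.
rewrite [X in _ = _ + X + _](eq_bigr (fun a : 'I_d => F (j, a))); last by move=> a _; rewrite bnd_r.
rewrite sum_pair (bigD1 i) //= (bigD1 j) /=; last by rewrite eq_sym Hij.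
by rewrite addrA.
Qed.

Definition zB (z : 'I_n * 'I_d -> R) : 'cV[R]_(d + d) := \col_k z (bnd i j k).
Definition zI (z : 'I_n * 'I_d -> R) : 'cV[R]_#|Int| := \col_k z (intv k).

Lemma zB_col z : zB z = col_mx (\col_a z (i, a)) (\col_a z (j, a)).
Proof.
apply/matrixP => k l; rewrite !mxE /bnd.
by case: (fintype.split k) => a; rewrite mxE.
Qed.

Lemma LAB z k : (LA w sigma i j *m zB z + LB w sigma i j *m zI z) k 0 =
  \sum_v L (bnd i j k) v * z v.
Proof.
rewrite sum_split !mxE; congr (_ + _); apply: eq_bigr => l _; by rewrite !mxE.
Qed.

Lemma LCD z k : (LC w sigma i j *m zB z + LD w sigma i j *m zI z) k 0 =
  \sum_v L (intv k) v * z v.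
Proof.
rewrite sum_split !mxE; congr (_ + _); apply: eq_bigr => l _; by rewrite !mxE.
Qed.

Lemma colker_unit m (A : 'M[R]_m) :
  (forall v : 'cV_m, A *m v = 0 -> v = 0) -> A \in unitmx.
Proof.
move=> H; rewrite -unitmx_tr -row_free_unit -kermx_eq0; apply/eqP.
apply/row_matrixP => r; rewrite row0.
have h : row r (kermx A^T) *m A^T = 0 by rewrite -row_mul mulmx_ker row0.
have := H (row r (kermx A^T))^T.
rewrite -{1}(trmxK A) -trmx_mul h trmx0 => /(_ erefl) /eqP.
by rewrite trmx_eq0 => /eqP.
Qed.

Lemma mpinv_unit m (A : 'M[R]_m) : A \in unitmx -> mpinv A = invmx A.
Proof.
move=> hA; rewrite /mpinv; case: xgetP => [X _ [h1 _ _ _]|H].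
  have : invmx A *m (A *m X *m A) *m invmx A = invmx A *m A *m invmx A.
    by rewrite h1.
  by rewrite !mulmxA (mulVmx hA) mul1mx (mulmxK hA) mul1mx.
exfalso; apply: (H (invmx A)); split.
- by rewrite (mulmxV hA) mul1mx.
- by rewrite (mulVmx hA) mul1mx.
- by rewrite (mulmxV hA) trmx1.
- by rewrite (mulVmx hA) trmx1.
Qed.

Lemma LD_unit : LD w sigma i j \in unitmx.
Proof.
apply: colker_unit => v hv.
pose z := fun u : 'I_n * 'I_d => \sum_k (intv k == u)%:R * v k 0.
have zint : forall k, z (intv k) = v k 0.
  move=> k; rewrite /z (bigD1 k) //= eqxx mul1r big1 ?addr0 // => k' hk'.
  have -> : (intv k' == intv k) = false.
    by apply/negbTE; apply: contra hk' => /eqP /enum_val_inj ->.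
  by rewrite mul0r.
have znot : forall u, u \notin Int -> z u = 0.
  move=> u hu; rewrite /z big1 // => k _; case: eqP => [hk|_]; last first.
    by rewrite /= mulr0n mul0r.
  by move: hu; rewrite -hk intv_in.
have hzB : zB z = 0.
  rewrite zB_col; apply/matrixP => k l; rewrite !mxE.
  by case: (fintype.split k) => a; rewrite mxE znot // inE /= eqxx ?andbF.
have hzI : zI z = v by apply/matrixP => k l; rewrite (ord1 l) mxE zint.
have q : \sum_u z u * \sum_v L u v * z v = 0.
  rewrite sum_split big1 ?add0r; last first.
    move=> k _; have := congr1 (fun M : 'cV[R]_(d + d) => M k 0) hzB.
    by rewrite !mxE => ->; rewrite mul0r.
  apply: big1 => k _; rewrite -LCD hzB hzI hv mulmx0 add0r mxE mulr0 //.
have zj : forall a, z (j, a) = 0.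
  by move=> a; apply: znot; rewrite inE /= eqxx andbF.
have H0 := key_lemma Hw Hconn Hsig zj q.
by apply/matrixP => k l; rewrite (ord1 l) -zint H0 mxE.
Qed.

Lemma cond_mul (Y : 'cV[R]_(d + d)) : conductance w sigma i j *m Y =
  LA w sigma i j *m Y + LB w sigma i j *m (- (invmx (LD w sigma i j) *m (LC w sigma i j *m Y))).
Proof.
by rewrite /conductance (mpinv_unit LD_unit) mulmxBl mulmxN -!mulmxA.
Qed.

Lemma cond_col (Y1 Y2 : 'cV[R]_d) : conductance w sigma i j *m col_mx Y1 Y2 =
  col_mx (C_ii w sigma i j *m Y1 + C_ij w sigma i j *m Y2)
         (dlsubmx (conductance w sigma i j) *m Y1 + drsubmx (conductance w sigma i j) *m Y2).
Proof. by rewrite -{1}(submxK (conductance w sigma i j)) mul_block_col. Qed.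

Lemma schur_row (z : 'I_n * 'I_d -> R) :
  (forall k : 'I_#|Int|, \sum_v L (intv k) v * z v = 0) ->
  (forall a, \sum_v L (i, a) v * z v = 0) ->
  C_ii w sigma i j *m (\col_a z (i, a)) + C_ij w sigma i j *m (\col_a z (j, a)) = 0.
Proof.
move=> Hint Hi.
have hD := LD_unit.
have h1 : LD w sigma i j *m zI z = - (LC w sigma i j *m zB z).
  apply/eqP; rewrite -addr_eq0 addrC; apply/eqP.
  by apply/matrixP => k l; rewrite (ord1 l) LCD Hint mxE.
have hI : zI z = - (invmx (LD w sigma i j) *m (LC w sigma i j *m zB z)).
  by rewrite -mulmxN -h1 (mulKmx hD).
have := cond_mul (zB z); rewrite -hI zB_col cond_col => e.
apply/matrixP => a l; rewrite (ord1 l).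
have := congr1 (fun M : 'cV[R]_(d + d) => M (lshift d a) 0) e.
rewrite col_mxEu -zB_col LAB bnd_l Hi => ->.
by rewrite mxE.
Qed.

Lemma Cii_unit : C_ii w sigma i j \in unitmx.
Proof.
apply: colker_unit => v hv.
have hD := LD_unit.
pose ZB := col_mx v (0 : 'cV[R]_d).
pose ZI := - (invmx (LD w sigma i j) *m (LC w sigma i j *m ZB)).
pose z := fun u : 'I_n * 'I_d =>
  if u.1 == i then v u.2 0 else \sum_k (intv k == u)%:R * ZI k 0.
have zint : forall k, z (intv k) = ZI k 0.
  move=> k; rewrite /z (negbTE (intv_i k)).
  rewrite (bigD1 k) //= eqxx mul1r big1 ?addr0 // => k' hk'.
  have -> : (intv k' == intv k) = false.
    by apply/negbTE; apply: contra hk' => /eqP /enum_val_inj ->.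
  by rewrite mul0r.
have zj : forall a, z (j, a) = 0.
  move=> a; rewrite /z /= eq_sym (negbTE Hij) big1 // => k _.
  case: eqP => [hk|_]; last by rewrite /= mulr0n mul0r.
  by have := intv_j k; rewrite hk /= eqxx.
have hzB : zB z = ZB.
  rewrite zB_col; congr col_mx; apply/matrixP => a l; rewrite (ord1 l) !mxE ?zj //.
  by rewrite /z /= eqxx.
have hzI : zI z = ZI by apply/matrixP => k l; rewrite (ord1 l) mxE zint.
have q : \sum_u z u * \sum_v L u v * z v = 0.
  rewrite sum_split [X in _ + X]big1 ?addr0; last first.
    move=> k _; rewrite -LCD hzB hzI /ZI mulmxN (mulKVmx hD) addrN mxE mulr0 //.
  rewrite big_split_ord /= [X in X + _]big1 ?add0r; last first.
    move=> a _; rewrite -LAB hzB hzI -cond_mul cond_col col_mxEu hv mulmx0 addr0.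
    by rewrite mxE mulr0.
  by apply: big1 => a _; rewrite bnd_r zj mul0r.
have H0 := key_lemma Hw Hconn Hsig zj q.
apply/matrixP => a l; rewrite (ord1 l) mxE.
by have := H0 (i, a); rewrite /z /= eqxx.
Qed.

Lemma Om_schur : C_ii w sigma i j *m Om w sigma j i + C_ij w sigma i j *m Om w sigma j j = 0.
Proof.
apply/matrixP => a b.
have := schur_row (z := fun u => Om w sigma j u.1 u.2 b).
have Hint : forall k : 'I_#|Int|, \sum_v L (intv k) v * Om w sigma j v.1 v.2 b = 0.
  move=> k; rewrite [intv k]surjective_pairing; apply: (harmonic Hw Hsig).
  exact: intv_j.
have Hi : forall a, \sum_v L (i, a) v * Om w sigma j v.1 v.2 b = 0.
  by move=> a'; apply: (harmonic Hw Hsig).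
move=> /(_ Hint Hi) /matrixP /(_ a 0).
move=> H; rewrite [RHS]mxE; rewrite [RHS]mxE in H; apply: (etrans _ H); rewrite !mxE.
congr (_ + _); apply: eq_bigr => c _; congr (_ * _); by rewrite [RHS]mxE.
Qed.
End Schur.

Theorem lemma5p4 (R : realType) (n d : nat)
  (w : 'I_n -> 'I_n -> R) (sigma : 'I_n -> 'I_n -> 'M[R]_d)
  (Hw : is_weighted_graph w) (Hconn : graph_connected w)
  (Hsig : is_connection w sigma)
  (i j : 'I_n) (Hij : i != j) :
  C_ii w sigma i j \in unitmx /\
  Omega0 w sigma i j = - (invmx (C_ii w sigma i j) *m C_ij w sigma i j).
Proof.
have hC := Cii_unit Hw Hconn Hsig Hij.
split => //.
have e := Om_schur Hw Hconn Hsig Hij.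
rewrite (Om_jj Hw Hsig) mulmx1 in e.
have -> : Omega0 w sigma i j = Om w sigma j i by [].
rewrite -(mulKmx hC (Om w sigma j i)) -mulmxN; congr (_ *m _).
by apply/eqP; rewrite -addr_eq0 e.
Qed.
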